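(* Let $n\ge3$ and let $k\ne\mathbb{F}_2$ be a field. Let $S=k[x_{i,j}]_{i,j=1}^n$ and $f=\sum_{\sigma\in S_n}a_\sigma x_{1,\sigma(1)}\cdots x_{n,\sigma(n)}$ with all $a_\sigma\in k^*$. Then $f$ is not a direct sum.
   Context: A form $f$ in a polynomial ring over $k$ is a direct sum if, after an invertible linear change of the variables, it can be written as $f_1+f_2$ with $f_1,f_2$ nonzero forms in disjoint sets of the new variables. *)

(* Defs.v *)
From HB Require Import structures.
From mathcomp Require Import all_boot all_order all_algebra all_fingroup.
From mathcomp Require Import mpoly.
Set Implicit Arguments. Unset Strict Implicit. Unset Printing Implicit Defensive.
Import GRing.Theory.
Local Open Scope ring_scope.

(* Variables of the polynomial ring k[x_{i,j}]_{i,j} are indexed by 'I_(n*n);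
   the variable x_{i,j} is 'X_(mxvec_index i j). *)
Definition xvar (n : nat) (i j : 'I_n) : 'I_(n * n) := mxvec_index i j.

Definition lin_subst (k : fieldType) (N : nat) (A : 'M[k]_N)
  : N.-tuple {mpoly k[N]} :=
  [tuple \sum_(j < N) A i j *: 'X_j | i < N].

Definition only_vars (k : fieldType) (N : nat) (V : {set 'I_N}) (p : {mpoly k[N]}) : Prop :=
  forall m, m \in msupp p -> forall i, i \notin V -> m i = 0%N.

Definition is_direct_sum (k : fieldType) (N : nat) (f : {mpoly k[N]}) : Prop :=
  exists A : 'M[k]_N, A \in unitmx /\
  exists (f1 f2 : {mpoly k[N]}) (V : {set 'I_N}),
    f1 != 0 /\ f2 != 0 /\ f1 \is homog mdeg /\ f2 \is homog mdeg /\
    only_vars V f1 /\ only_vars (~: V) f2 /\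
    f \mPo lin_subst A = f1 + f2.

Definition perm_form (k : fieldType) (n : nat) (a : 'S_n -> k) : {mpoly k[n * n]} :=
  \sum_(s : 'S_n) a s *: \prod_(i < n) 'X_(xvar i (s i)).

(* Main.v *)
Require Import Defs.
From HB Require Import structures.
From mathcomp Require Import all_boot all_order all_algebra all_fingroup.
From mathcomp Require Import mpoly.
From mathcomp Require Import zify.
Require Import Defs.
Set Implicit Arguments. Unset Strict Implicit. Unset Printing Implicit Defensive.
Import GRing.Theory.
Local Open Scope ring_scope.

Section Gen.
Variables (k : fieldType) (N : nat).
Implicit Types (p q : {mpoly k[N]}).

Lemma mpoly_ind_ring (P : {mpoly k[N]} -> Prop) :
  (forall c, P c%:MP) -> (forall i, P 'X_i) ->
  (forall p q, P p -> P q -> P (p + q)) ->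
  (forall p q, P p -> P q -> P (p * q)) -> forall p, P p.
Proof.
move=> HC HX HD HM p; rewrite [p]mpolyE.
apply: big_ind => //; first by rewrite -mpolyC0.
move=> m _; rewrite -mul_mpolyC; apply: (HM) => //.
rewrite mpolyXE_id; apply: big_ind => //; first by rewrite -mpolyC1.
move=> i _; elim: (m i) => [|e IH]; first by rewrite expr0 -mpolyC1.
by rewrite exprS; apply: (HM).
Qed.

Lemma mderivXU (i j : 'I_N) : ('X_i : {mpoly k[N]})^`M(j) = ((i == j)%:R)%:MP.
Proof.
rewrite mderivX mnm1E; case: (eqVneq i j) => [->|ne].
  by rewrite -[X in (X - _)%MM]add0m addmK mpolyX0 scale1r mpolyC1.
by rewrite scale0r mpolyC0.
Qed.

Lemma compXU (lq : N.-tuple {mpoly k[N]}) i : 'X_i \mPo lq = tnth lq i.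
Proof. by rewrite comp_mpolyXU -tnth_nth. Qed.

Lemma tnth_lin (A : 'M[k]_N) i : tnth (lin_subst A) i = \sum_(j < N) A i j *: 'X_j.
Proof. by rewrite tnth_mktuple. Qed.

Lemma sum_delta (c : 'I_N -> k) (v : 'I_N) :
  \sum_(l < N) c l *: ((l == v)%:R)%:MP = (c v)%:MP :> {mpoly k[N]}.
Proof.
rewrite (bigD1 v) //= big1 => [|l /negbTE ->]; last by rewrite mpolyC0 scaler0.
by rewrite eqxx mpolyC1 addr0 -mul_mpolyC mulr1.
Qed.

Lemma chain (A : 'M[k]_N) v p :
  (p \mPo lin_subst A)^`M(v) = \sum_(i < N) A i v *: (p^`M(i) \mPo lin_subst A).
Proof.
elim/mpoly_ind_ring: p.
- move=> c; rewrite comp_mpolyC !mderivC big1 // => i _.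
  by rewrite mderivC comp_mpoly0 scaler0.
- move=> j; rewrite compXU tnth_lin raddf_sum /=.
  under eq_bigr => l _ do rewrite mderivZ mderivXU.
  rewrite sum_delta.
  under [RHS]eq_bigr => i _ do rewrite mderivXU comp_mpolyC eq_sym.
  by rewrite sum_delta.
- move=> p q Hp Hq; rewrite comp_mpolyD mderivD Hp Hq -big_split /=.
  by apply: eq_bigr => i _; rewrite mderivD comp_mpolyD scalerDr.
- move=> p q Hp Hq; rewrite rmorphM /= mderivM Hp Hq mulr_suml mulr_sumr -big_split /=.
  apply: eq_bigr => i _; rewrite mderivM comp_mpolyD !rmorphM /= scalerDr.
  by rewrite scalerAl scalerAr.
Qed.

Lemma comp_assoc (lq lr : N.-tuple {mpoly k[N]}) p :
  (p \mPo lq) \mPo lr = p \mPo [tuple (tnth lq i \mPo lr) | i < N].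
Proof.
elim/mpoly_ind_ring: p.
- by move=> c; rewrite !comp_mpolyC.
- by move=> i; rewrite !compXU tnth_mktuple.
- by move=> p q Hp Hq; rewrite !comp_mpolyD Hp Hq.
- by move=> p q Hp Hq; rewrite !rmorphM /= Hp Hq.
Qed.

Lemma lin_subst_K (A : 'M[k]_N) p : A \in unitmx ->
  (p \mPo lin_subst A) \mPo lin_subst (invmx A) = p.
Proof.
move=> uA; rewrite comp_assoc.
rewrite -[RHS](comp_mpoly_id p); congr (p \mPo _).
apply: eq_from_tnth => i; rewrite !tnth_mktuple raddf_sum /=.
under eq_bigr => j _ do rewrite comp_mpolyZ compXU tnth_lin scaler_sumr.
rewrite exchange_big /=.
under eq_bigr => l _ do (under eq_bigr => j _ do rewrite scalerA; rewrite -scaler_suml).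
have E : forall l, \sum_(j < N) A i j * invmx A j l = (i == l)%:R.
  move=> l; have := congr1 (fun M : 'M[k]_N => M i l) (mulmxV uA).
  by rewrite /= !mxE.
under eq_bigr => l _ do rewrite E.
rewrite (bigD1 i) //= big1 => [|l /negbTE ne]; last by rewrite eq_sym ne scale0r.
by rewrite eqxx scale1r addr0.
Qed.

End Gen.

Section Comb.
Variables (k : fieldType) (n : nat) (a : 'S_n -> k).

Lemma xvar_eq (i j i' j' : 'I_n) :
  (xvar i j == xvar i' j') = (i == i') && (j == j').
Proof.
rewrite /xvar /mxvec_index; apply/eqP/andP => [|[/eqP-> /eqP->] //].
move/cast_ord_inj/enum_rank_inj => [-> ->]; by split.
Qed.

Definition mS (s : 'S_n) : 'X_{1..n * n} := (\sum_(i < n) U_(xvar i (s i)))%MM.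

Definition rs (r : 'I_n) (m : 'X_{1..n * n}) := (\sum_(c < n) m (xvar r c))%N.
Definition cs (c : 'I_n) (m : 'X_{1..n * n}) := (\sum_(r < n) m (xvar r c))%N.

Lemma rsD r m1 m2 : rs r (m1 + m2)%MM = (rs r m1 + rs r m2)%N.
Proof. by rewrite /rs -big_split; apply: eq_bigr => c _; rewrite mnmDE. Qed.
Lemma csD c m1 m2 : cs c (m1 + m2)%MM = (cs c m1 + cs c m2)%N.
Proof. by rewrite /cs -big_split; apply: eq_bigr => r _; rewrite mnmDE. Qed.

Lemma rs_sum x (P : pred 'I_n) (g : 'I_n -> 'I_n) :
  rs x (\sum_(r | P r) U_(xvar r (g r)))%MM = (\sum_(r | P r) (r == x))%N.
Proof.
rewrite /rs (eq_bigr _ (fun c _ => mnm_sumE _ _ _ _)).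
rewrite exchange_big /=; apply: eq_bigr => r _.
under eq_bigr => c _ do rewrite mnm1E xvar_eq.
case: (eqVneq r x) => [->|ne] /=; last by rewrite big1.
by rewrite (bigD1 (g x)) //= eqxx big1 // => c /negbTE; rewrite eq_sym => ->.
Qed.

Lemma cs_sum x (P : pred 'I_n) (g : 'I_n -> 'I_n) :
  cs x (\sum_(r | P r) U_(xvar r (g r)))%MM = (\sum_(r | P r) (g r == x))%N.
Proof.
rewrite /cs (eq_bigr _ (fun c _ => mnm_sumE _ _ _ _)).
rewrite exchange_big /=; apply: eq_bigr => r _.
under eq_bigr => c _ do rewrite mnm1E xvar_eq.
rewrite (bigD1 r) //= eqxx /= big1 ?addn0 // => c /negbTE; rewrite eq_sym => ->.
by [].
Qed.

Lemma rsU x i j : rs x U_(xvar i j)%MM = (i == x).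
Proof.
have := rs_sum x (pred1 i) (fun _ => j).
by rewrite !big_pred1_eq.
Qed.

Lemma csU x i j : cs x U_(xvar i j)%MM = (j == x).
Proof.
have := cs_sum x (pred1 i) (fun _ => j).
by rewrite !big_pred1_eq.
Qed.

Lemma rs_mS x s : rs x (mS s) = 1%N.
Proof.
rewrite rs_sum (bigD1 x) //= eqxx big1 // => r /negbTE ->.
by [].
Qed.

Lemma cs_mS x (s : 'S_n) : cs x (mS s) = 1%N.
Proof.
rewrite cs_sum (bigD1 (s^-1 x)%g) //= permKV eqxx big1 // => r ne.
case: eqP => // E; move: ne; by rewrite -E permK eqxx.
Qed.

Lemma mS_eval (s : 'S_n) r c : mS s (xvar r c) = (s r == c).
Proof.
rewrite mnm_sumE (bigD1 r) //= mnm1E xvar_eq eqxx /= big1 ?addn0 // => i ne.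
by rewrite mnm1E xvar_eq (negbTE ne).
Qed.

Lemma mS_inj : injective mS.
Proof.
move=> s t E; apply/permP => r; have := mS_eval s r (s r).
by rewrite E mS_eval eqxx; case: eqP.
Qed.

Lemma perm_formE : perm_form a = \sum_(s : 'S_n) a s *: 'X_[mS s].
Proof.
apply: eq_bigr => s _; congr (_ *: _).
by rewrite /mS (big_morph (fun m => 'X_[m]) (@mpolyXD _ _) (@mpolyX0 _ _)).
Qed.

Lemma coef_f m : (perm_form a)@_m = \sum_(s : 'S_n) a s * (mS s == m)%:R.
Proof.
rewrite perm_formE raddf_sum /=; apply: eq_bigr => s _.
by rewrite mcoeffZ mcoeffX.
Qed.

Lemma coef_f_mS s : (perm_form a)@_(mS s) = a s.
Proof.
rewrite coef_f (bigD1 s) //= eqxx mulr1 big1 ?addr0 // => t ne.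
by rewrite (inj_eq mS_inj) (negbTE ne) mulr0.
Qed.

Lemma coef_f_rs m r : rs r m != 1%N -> (perm_form a)@_m = 0.
Proof.
move=> H; rewrite coef_f big1 // => s _.
case: eqP => [E|]; last by rewrite mulr0.
by move: H; rewrite -E rs_mS.
Qed.

Lemma coef_f_cs m c : cs c m != 1%N -> (perm_form a)@_m = 0.
Proof.
move=> H; rewrite coef_f big1 // => s _.
case: eqP => [E|]; last by rewrite mulr0.
by move: H; rewrite -E cs_mS.
Qed.

Lemma third (x y : 'I_n) : (3 <= n)%N -> exists z : 'I_n, z != x /\ z != y.
Proof.
move=> n3; case: (pickP [pred z : 'I_n | (z != x) && (z != y)]) => [z /andP[]|H].
  by exists z.
have : (#|'I_n| <= #|[set x; y]|)%N.
  apply: subset_leq_card; apply/subsetP => z _; rewrite !inE.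
  by have := H z; rewrite /=; case: (z == x); case: (z == y).
rewrite card_ord cards2; case: (x != y); lia.
Qed.

Lemma perm2 (x y u v : 'I_n) : x != y -> u != v ->
  exists s : 'S_n, s x = u /\ s y = v.
Proof.
move=> nxy nuv; pose t := tperm x u.
have tx : t x = u by rewrite /t tpermL.
have ty : t y != u.
  rewrite -tx; apply: contra nxy => /eqP E.
  by apply/eqP/(@perm_inj _ t).
exists (t * tperm (t y) v)%g; rewrite !permM tx; split.
  by rewrite tpermD // eq_sym.
by rewrite tpermL.
Qed.

Local Notation f := (perm_form a).
Definition H mu (P L : 'I_(n * n)) := ((f^`M(P))^`M(L))@_mu.

Lemma coef_FF mu P L :
  H mu P L = f@_(mu + U_(L) + U_(P))%MM *+ ((mu + U_(L))%MM P).+1 *+ (mu L).+1.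
Proof. by rewrite /H !mcoeff_mderiv. Qed.

Lemma H_rs mu P L r : rs r (mu + U_(L) + U_(P))%MM != 1%N -> H mu P L = 0.
Proof. by move=> h; rewrite coef_FF (coef_f_rs h) !mul0rn. Qed.

Lemma H_cs mu P L c : cs c (mu + U_(L) + U_(P))%MM != 1%N -> H mu P L = 0.
Proof. by move=> h; rewrite coef_FF (coef_f_cs h) !mul0rn. Qed.

Definition muS (s : 'S_n) (a0 k0 : 'I_n) : 'X_{1..n * n} :=
  (\sum_(r | (r != a0) && (r != k0)) U_(xvar r (s r)))%MM.

Lemma muS_eval (s : 'S_n) (a0 k0 x y : 'I_n) : (x == a0) || (x == k0) -> muS s a0 k0 (xvar x y) = 0%N.
Proof.
move=> hx; rewrite mnm_sumE big1 // => r /andP[ra rk].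
rewrite mnm1E xvar_eq; case: (eqVneq r x) => //= E.
by move: hx; rewrite -E (negbTE ra) (negbTE rk).
Qed.

Lemma H_main (s : 'S_n) (a0 k0 : 'I_n) : a0 != k0 ->
  H (muS s a0 k0) (xvar a0 (s a0)) (xvar k0 (s k0)) = a s.
Proof.
move=> ne; rewrite coef_FF mnmDE !muS_eval ?eqxx ?orbT //.
rewrite mnm1E xvar_eq eq_sym (negbTE ne) /= !mulr1n.
suff -> : (muS s a0 k0 + U_(xvar k0 (s k0)) + U_(xvar a0 (s a0)))%MM = mS s.
  by rewrite coef_f_mS.
rewrite /mS (bigD1 a0) //= (bigD1 k0) 1?eq_sym //= /muS.
by rewrite addmC; congr (_ + _)%MM; rewrite addmC.
Qed.

Lemma rs_muS (s : 'S_n) (a0 k0 : 'I_n) : rs a0 (muS s a0 k0) = 0%N.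
Proof. by rewrite /muS rs_sum big1 // => r /andP[/negbTE -> _]. Qed.

Lemma cs_muS (s : 'S_n) (a0 k0 : 'I_n) : cs (s a0) (muS s a0 k0) = 0%N.
Proof.
rewrite /muS cs_sum big1 // => r /andP[ra _].
by rewrite (inj_eq perm_inj) (negbTE ra).
Qed.

Lemma rs_muS_ge (s : 'S_n) (a0 k0 i : 'I_n) : i != a0 -> i != k0 -> (1 <= rs i (muS s a0 k0))%N.
Proof.
move=> h1 h2; rewrite /muS rs_sum (bigD1 i) /=; last by rewrite h1 h2.
by rewrite eqxx.
Qed.

Lemma cs_muS_ge (s : 'S_n) (a0 k0 j : 'I_n) : s a0 != j -> s k0 != j -> (1 <= cs j (muS s a0 k0))%N.
Proof.
move=> h1 h2; rewrite /muS cs_sum (bigD1 (s^-1 j)%g) /=; last first.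
  apply/andP; split.
    by apply: contra h1 => /eqP <-; rewrite permKV.
  by apply: contra h2 => /eqP <-; rewrite permKV.
by rewrite permKV eqxx.
Qed.

Lemma ne_sym (T : eqType) (x y : T) : x != y -> y != x.
Proof. by rewrite eq_sym. Qed.

Lemma LHS_main (pi : 'M[k]_(n * n)) I (s : 'S_n) (a0 k0 : 'I_n) : a0 != k0 ->
  \sum_(P < n * n) pi P I * H (muS s a0 k0) P (xvar k0 (s k0))
  = pi (xvar a0 (s a0)) I * a s.
Proof.
move=> ne; rewrite (bigD1 (xvar a0 (s a0))) //= H_main // big1 ?addr0 // => P.
case/mxvec_indexP: P => a1 b1; rewrite -/(xvar a1 b1) => neP.
case: (eqVneq a1 a0) => [ea|na].
  rewrite (@H_cs _ _ _ (s a0)) ?mulr0 // !csD cs_muS !csU.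
  rewrite (inj_eq perm_inj) (negbTE (ne_sym ne)) /=.
  move: neP; rewrite ea xvar_eq eqxx /=; by case: (b1 == s a0).
rewrite (@H_rs _ _ _ a0) ?mulr0 // !rsD rs_muS !rsU (negbTE na).
by rewrite (negbTE (ne_sym ne)).
Qed.

Lemma RHS_zero_rs (pi : 'M[k]_(n * n)) mu (i j : 'I_n) L :
  (1 <= rs i mu)%N -> \sum_(C < n * n) H mu (xvar i j) C * pi C L = 0.
Proof.
move=> h; rewrite big1 // => C _; rewrite (@H_rs _ _ _ i) ?mul0r //.
rewrite !rsD rsU eqxx; lia.
Qed.

Lemma RHS_zero_cs (pi : 'M[k]_(n * n)) mu (i j : 'I_n) L :
  (1 <= cs j mu)%N -> \sum_(C < n * n) H mu (xvar i j) C * pi C L = 0.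
Proof.
move=> h; rewrite big1 // => C _; rewrite (@H_cs _ _ _ j) ?mul0r //.
rewrite !csD csU eqxx; lia.
Qed.

Section Centr.
Variables (pi : 'M[k]_(n * n)).
Hypothesis n3 : (3 <= n)%N.
Hypothesis anz : forall s, a s != 0.
Hypothesis Hc : forall mu I L,
  \sum_(P < n * n) pi P I * H mu P L = \sum_(C < n * n) H mu I C * pi C L.

Lemma step1 P I : P != I -> pi P I = 0.
Proof.
case/mxvec_indexP: P => a0 b0; case/mxvec_indexP: I => i j.
rewrite -/(xvar a0 b0) -/(xvar i j) => neq.
have key : forall (s : 'S_n) k0, a0 != k0 -> s a0 = b0 ->
    \sum_(C < n * n) H (muS s a0 k0) (xvar i j) C * pi C (xvar k0 (s k0)) = 0 ->
    pi (xvar a0 b0) (xvar i j) = 0.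
  move=> s k0 ne sa R; have := Hc (muS s a0 k0) (xvar i j) (xvar k0 (s k0)).
  rewrite LHS_main // R sa => /eqP; rewrite mulf_eq0 (negbTE (anz s)) orbF.
  by move/eqP.
case: (eqVneq a0 i) => [ea | na].
  have nb : b0 != j by move: neq; rewrite ea xvar_eq eqxx.
  have [k0 [k1 _]] := third a0 a0 n3.
  have [l0 [l1 l2]] := third b0 j n3.
  have [s [sa sk]] := perm2 (ne_sym k1) (ne_sym l1).
  apply: (key s k0) => //; first exact: ne_sym.
  apply: RHS_zero_cs; apply: cs_muS_ge; by rewrite ?sa ?sk // ne_sym.
have [k0 [k1 k2]] := third a0 i n3.
have [l0 [l1 _]] := third b0 b0 n3.
have [s [sa sk]] := perm2 (ne_sym k1) (ne_sym l1).
apply: (key s k0) => //; first exact: ne_sym.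
apply: RHS_zero_rs; apply: rs_muS_ge; exact: ne_sym.
Qed.

Lemma step2_direct (i j k0 l0 : 'I_n) : i != k0 -> j != l0 ->
  pi (xvar i j) (xvar i j) = pi (xvar k0 l0) (xvar k0 l0).
Proof.
move=> ik jl; have [s [si sk]] := perm2 ik jl.
have := Hc (muS s i k0) (xvar i j) (xvar k0 l0).
have HM := H_main s ik; rewrite si sk in HM.
have := LHS_main pi (xvar i j) s ik; rewrite si sk => ->.
rewrite (bigD1 (xvar k0 l0)) //= HM big1 ?addr0; last first.
  by move=> C ne; rewrite step1 ?mulr0.
by rewrite mulrC; apply: mulfI.
Qed.

Lemma step2 I L : pi I I = pi L L.
Proof.
case/mxvec_indexP: I => i j; case/mxvec_indexP: L => k0 l0.
rewrite -/(xvar i j) -/(xvar k0 l0).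
have [r [r1 r2]] := third i k0 n3.
have [c [c1 c2]] := third j l0 n3.
rewrite (@step2_direct i j r c) ?(ne_sym r1) ?(ne_sym c1) //.
by rewrite (@step2_direct r c k0 l0).
Qed.

Lemma pi_scalar I0 : pi = (pi I0 I0)%:M.
Proof.
apply/matrixP => P I; rewrite mxE; case: (eqVneq P I) => [->|ne].
  by rewrite (step2 I I0) mulr1n.
by rewrite step1 // mulr0n.
Qed.

End Centr.

End Comb.

Section Gen2.
Variables (k : fieldType) (N : nat).
Implicit Types (p q : {mpoly k[N]}).

Lemma only_vars_deriv0 (V : {set 'I_N}) p w : only_vars V p -> w \notin V -> p^`M(w) = 0.
Proof.
move=> o wV; apply/mpolyP => m; rewrite mcoeff_mderiv mcoeff0.
case: (boolP ((m + U_(w))%MM \in msupp p)) => [/o /(_ w wV)|].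
  by rewrite mnmDE mnm1E eqxx addn1.
by move/memN_msupp_eq0 ->; rewrite mul0rn.
Qed.

Lemma const_poly p : (forall m, m \in msupp p -> m = 0%MM) -> p = (p@_0%MM)%:MP.
Proof.
move=> h; apply/mpolyP => m; rewrite mcoeffC.
case: (eqVneq m 0%MM) => [->|nz]; first by rewrite mulr1.
rewrite mulr0; case: (boolP (m \in msupp p)) => [/h E|]; first by move: nz; rewrite E eqxx.
by move/memN_msupp_eq0.
Qed.

Lemma only_vars_empty (V : {set 'I_N}) p :
  (forall i, i \notin V) -> only_vars V p -> p = (p@_0%MM)%:MP.
Proof.
move=> hV o; apply: const_poly => m /o h; apply/mnmP => i; rewrite mnm0E; exact: h.
Qed.

Lemma meval0E p : p.@[fun _ => 0] = p@_0%MM.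
Proof.
elim/mpolyind: p => [|c m p _ _ IH]; first by rewrite meval0 mcoeff0.
rewrite mevalD mevalZ mevalX mcoeffD mcoeffZ mcoeffX IH; congr (_ * _ + _).
case: (eqVneq m 0%MM) => [->|nz].
  by rewrite big1 // => i _; rewrite mnm0E expr0.
case: (pickP (fun i => m i != 0%N)) => [i hi|H].
  by rewrite (bigD1 i) //= expr0n (negbTE hi) mul0r.
suff E0 : m = 0%MM by move: nz; rewrite E0 eqxx.
apply/mnmP => i; rewrite mnm0E; have := H i; rewrite /=; by case: (m i).
Qed.

Lemma comp_const (A : 'M[k]_N) p : (p \mPo lin_subst A)@_0%MM = p@_0%MM.
Proof.
rewrite -!meval0E comp_mpoly_meval; apply: meval_eq => i.
rewrite tnth_lin raddf_sum big1 // => j _ /=; by rewrite mevalZ mevalXU mulr0.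
Qed.

Lemma chain2 (A : 'M[k]_N) v w p :
  ((p \mPo lin_subst A)^`M(v))^`M(w) =
  (\sum_(i < N) \sum_(l < N) (A i v * A l w) *: (p^`M(i))^`M(l)) \mPo lin_subst A.
Proof.
rewrite chain !raddf_sum /=; apply: eq_bigr => i _.
rewrite mderivZ chain scaler_sumr raddf_sum /=; apply: eq_bigr => l _.
by rewrite comp_mpolyZ scalerA.
Qed.

Lemma degen (g p : {mpoly k[N]}) c : g = c%:MP + p -> c != 0 -> p \is homog mdeg ->
  g@_0%MM = 0 -> forall v, g^`M(v) = 0.
Proof.
move=> -> c0 hp g0 v.
have p0 : p@_0%MM != 0.
  move: g0; rewrite mcoeffD mcoeffC eqxx mulr1 => /eqP; rewrite addrC addr_eq0 => /eqP ->.
  by rewrite oppr_eq0.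
have mem0 : 0%MM \in msupp p by rewrite mcoeff_msupp.
rewrite homog_msize in hp; move/dhomogP: hp => hp.
have d0 : (mmeasure mdeg p).-1 = 0%N by rewrite -(hp _ mem0); exact: mdeg0.
rewrite (@const_poly p) => [|m /hp]; first by rewrite mderivD !mderivC addr0.
rewrite d0 => h; apply/eqP; rewrite -mdeg_eq0; apply/eqP; exact: h.
Qed.

End Gen2.

Unset Implicit Arguments.
Set Strict Implicit.

Theorem corollary5p7 (k : fieldType) (n : nat) (a : 'S_n -> k) :
  (3 <= n)%N ->
  (exists x : k, x != 0 /\ x != 1) ->
  (forall s : 'S_n, a s != 0) ->
  ~ is_direct_sum (perm_form a).
Proof.
move=> n3 _ anz [A [uA [f1 [f2 [V [nz1 [nz2 [h1 [h2 [o1 [o2 E]]]]]]]]]]].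
set L := lin_subst A.
set g := perm_form a \mPo L.
have i0 : 'I_n by exists 0%N; lia.
have f0 : (perm_form a)@_0%MM = 0.
  rewrite coef_f big1 // => s _; case: eqP => [E0|]; last by rewrite mulr0.
  by have := mS_eval s i0 (s i0); rewrite E0 mnm0E eqxx.
have g0 : g@_0%MM = 0 by rewrite /g comp_const.
have [V' [[v vV] [[w wV] Hg]]] : exists V' : {set 'I_(n * n)},
   (exists v, v \in V') /\ (exists w, w \notin V') /\
   forall v w, v \in V' -> w \notin V' -> (g^`M(v))^`M(w) = 0.
  have [j0 [j1 _]] := third i0 i0 n3.
  have Hall : (forall v, g^`M(v) = 0) -> exists V' : {set 'I_(n * n)},
   (exists v, v \in V') /\ (exists w, w \notin V') /\
   forall v w, v \in V' -> w \notin V' -> (g^`M(v))^`M(w) = 0.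
    move=> D0; exists [set xvar i0 i0]; split; first by exists (xvar i0 i0); rewrite inE.
    split; first by exists (xvar i0 j0); rewrite inE xvar_eq eqxx (negbTE j1).
    by move=> v w _ _; rewrite D0 mderiv0.
  case: (pickP (mem V)) => [v vV|nV].
    case: (pickP (mem (~: V))) => [w wV|nW].
      exists V; split; first by exists v; move: vV; rewrite -topredE.
      split; first by exists w; move: wV; rewrite -topredE /= inE.
      move=> v' w' vV' wV'; rewrite /g E mderivD !raddfD /=.
      rewrite mderiv_comm (only_vars_deriv0 o1 wV') mderiv0 add0r.
      by rewrite (only_vars_deriv0 o2) ?mderiv0 // inE negbK.
    apply: Hall; apply: (@degen _ _ _ f1 (f2@_0%MM)) => //.
    - rewrite /g E addrC; congr (_ + _); apply: (@only_vars_empty _ _ (~: V)) => // i.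
      exact: (negbT (nW i)).
    - apply: contra nz2 => /eqP e.
      rewrite (@only_vars_empty _ _ (~: V) f2) ?e ?mpolyC0 // => i.
      exact: (negbT (nW i)).
  apply: Hall; apply: (@degen _ _ _ f2 (f1@_0%MM)) => //.
  - rewrite /g E; congr (_ + _); apply: (@only_vars_empty _ _ V) => // i.
    exact: (negbT (nV i)).
  - apply: contra nz1 => /eqP e.
    rewrite (@only_vars_empty _ _ V f1) ?e ?mpolyC0 // => i.
    exact: (negbT (nV i)).
pose F i l := ((perm_form a)^`M(i))^`M(l).
have h0 : forall v w, v \in V' -> w \notin V' ->
    \sum_(i < n * n) \sum_(l < n * n) (A i v * A l w) *: F i l = 0.
  move=> v1 w1 hv hw; have := Hg v1 w1 hv hw; rewrite /g /L chain2 => e.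
  by rewrite -[LHS](@lin_subst_K _ _ A _ uA) e comp_mpoly0.
pose Hm mu : 'M[k]_(n * n) := \matrix_(i, l) H a mu i l.
have Z : forall mu v w, v \in V' -> w \notin V' -> (A^T *m Hm mu *m A) v w = 0.
  move=> mu v1 w1 hv hw; have := congr1 (mcoeff mu) (h0 v1 w1 hv hw).
  rewrite mcoeff0 raddf_sum /= => <-.
  rewrite mxE (eq_bigr (fun j => \sum_i A i v1 * Hm mu i j * A j w1)); last first.
    by move=> j _; rewrite mxE mulr_suml; apply: eq_bigr => i _; rewrite mxE.
  rewrite exchange_big /=; apply: eq_bigr => i _.
  rewrite raddf_sum /=; apply: eq_bigr => l _.
  by rewrite mcoeffZ !mxE /H /F mulrAC.
have Hsym : forall mu, (Hm mu)^T = Hm mu.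
  by move=> mu; apply/matrixP => i l; rewrite !mxE /H mderiv_comm.
pose d := \row_(j < n * n) ((j \in V')%:R : k).
pose D := diag_mx d.
pose B := invmx A.
have DG : forall mu, D *m (A^T *m Hm mu *m A) = (A^T *m Hm mu *m A) *m D.
  move=> mu; have Gsym : (A^T *m Hm mu *m A)^T = A^T *m Hm mu *m A.
    by rewrite !trmx_mul trmxK Hsym mulmxA.
  have Z' := Z mu.
  set G := (A^T *m Hm mu *m A) in Gsym Z' *.
  clearbody G.
  apply/matrixP => i l; rewrite mul_diag_mx mul_mx_diag !mxE.
  case: (boolP (i \in V')) => hi; case: (boolP (l \in V')) => hl.
  - by rewrite /= mul1r mulr1.
  - by rewrite (Z' _ _ hi hl) mulr0 mul0r.
  - have e : G i l = 0 by rewrite -Gsym mxE; apply: Z'.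
    by rewrite e mul0r mul0r.
  - by rewrite mul0r mulr0.
pose pi := A *m D *m B.
have eD0 : D = B *m pi *m A.
  by rewrite /pi !mulmxA mulVmx // mul1mx -mulmxA mulVmx // mulmx1.
have Hc : forall mu, pi^T *m Hm mu = Hm mu *m pi.
  move=> mu; have e := congr1 (fun M => B^T *m M *m B) (DG mu); move: e => /=.
  rewrite !mulmxA -(mulmxA _ A B) mulmxV // mulmx1 -trmx_mul mulmxV // trmx1 mul1mx.
  rewrite /pi !trmx_mul tr_diag_mx -!mulmxA => ->.
  by rewrite !mulmxA.
clearbody pi.
have Hc' : forall mu I L,
    \sum_(P < n * n) pi P I * H a mu P L = \sum_(C < n * n) H a mu I C * pi C L.
  move=> mu I0 L0; have e := congr1 (fun M : 'M[k]_(n * n) => M I0 L0) (Hc mu).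
  rewrite /= !mxE in e.
  transitivity (\sum_j pi^T I0 j * Hm mu j L0).
    by apply: eq_bigr => P _; rewrite !mxE.
  by rewrite e; apply: eq_bigr => C _; rewrite !mxE.
have psc := pi_scalar n3 anz Hc' v.
move: eD0; rewrite psc mul_mx_scalar -scalemxAl mulVmx // scalemx1 => eD.
have e1 := congr1 (fun M : 'M[k]_(n * n) => M v v) eD.
have e2 := congr1 (fun M : 'M[k]_(n * n) => M w w) eD.
move: e1 e2; rewrite /= !mxE eqxx vV (negbTE wV) /= !mulr1n => <-.
rewrite eqxx mul0rn => /eqP; by rewrite eq_sym oner_eq0.
Qed.
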